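(* For any program $\Omega$ with weight constraints, the nondisjunctive translation $[\Omega]^{nd}$ is strongly equivalent to the translation $[\Omega]$.
   Context: Programs with nested expressions. A literal is a propositional atom $a$ or its classical negation $\neg a$; a set of literals is consistent if it contains no pair $a,\neg a$. Elementary formulas are literals, $\bot$ and $\top$. Formulas are built from elementary formulas using the unary connective $\mathit{not}$ and the binary connectives '','' (conjunction) and '';'' (disjunction). A rule with nested expressions has the form $\mathit{Head}\leftarrow \mathit{Body}$ with formulas $\mathit{Head},\mathit{Body}$; a program with nested expressions is a set of such rules. For a consistent set $Z$ of literals: $Z\models l$ iff $l\in Z$; $Z\models\top$; $Z\not\models\bot$; $Z\models(F,G)$ iff both; $Z\models(F;G)$ iff at least one; $Z\models \mathit{not}\,F$ iff $Z\not\models F$. $Z$ satisfies a program if for every rule, $Z\models\mathit{Body}$ implies $Z\models\mathit{Head}$. The reduct $F^Z$: $F^Z=F$ for elementary $F$; $(F,G)^Z=F^Z,G^Z$; $(F;G)^Z=F^Z;G^Z$; $(\mathit{not}\,F)^Z=\bot$ if $Z\models F$ and $\top$ otherwise; $\Pi^Z$ consists of the rules $\mathit{Head}^Z\leftarrow\mathit{Body}^Z$. $Z$ is an answer set of a program without $\mathit{not}$ if it is a minimal consistent set of literals satisfying it, and of an arbitrary $\Pi$ if it is an answer set of $\Pi^Z$. Programs $\Pi_1,\Pi_2$ are strongly equivalent if for every program $\Pi$ with nested expressions, $\Pi_1\cup\Pi$ and $\Pi_2\cup\Pi$ have the same answer sets. Abbreviation: $\langle F_1,\dots,F_n\rangle:X$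 (for $X$ a set of subsets of $\{1,\dots,n\}$) is the disjunction over $I\in X$ of the conjunctions of $F_i$, $i\in I$ (empty conjunction $\top$, empty disjunction $\bot$). Weight constraints. A rule element is a literal $l$ (positive) or $\mathit{not}\ l$ (negative). A weight constraint is $L\le\{c_1=w_1,\dots,c_m=w_m\}\le U$ with $L,U$ reals or $\pm\infty$, rule elements $c_i$ ($m\ge0$), nonnegative real weights $w_i$. A rule with weight constraints is $C_0\leftarrow C_1,\dots,C_n$ ($n\ge 0$) with weight constraints $C_i$; the rule elements of $C_0$ are its head elements; a program with weight constraints is a set of such rules. Translations. For $S=\{c_1=w_1,\dots,c_m=w_m\}$ and real $w$: $[w\le S]=\langle c_1,\dots,c_m\rangle:\{I\subseteq\{1,\dots,m\}: w\le\sum_{i\in I}w_i\}$, $[w<S]=\langle c_1,\dots,c_m\rangle:\{I: w<\sum_{i\in I}w_i\}$, $[S\le U]=\mathit{not}\,[U<S]$, $[L\le S\le U]=[L\le S],[S\le U]$. $[\Omega]$ replaces each rule $C_0\leftarrow C_1,\dots,C_n$ with $(l_1;\mathit{not}\,l_1),\dots,(l_p;\mathit{not}\,l_p),[C_0]\leftarrow[C_1],\dots,[C_n]$, where $l_1,\dots,l_p$ are the positive head elements of the rule. $[\Omega]^{nd}$ replaces each such rule with the $p+1$ rules $l_j\leftarrow\mathit{not}\,\mathit{not}\,l_j,[C_1],\dots,[C_n]$ ($1\le j\le p$) and $\bot\leftarrow\mathit{not}\,[C_0],[C_1],\dots,[C_n]$. *)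

(* Defs.v *)
From Stdlib Require Import Reals List ClassicalDescription.
Import ListNotations.
Open Scope R_scope.

Set Implicit Arguments.

Section Nested.
Variable atom : Type.

(** Literals: an atom [a] or its classical negation [~a]. *)
Inductive lit : Type := LPos (a : atom) | LNeg (a : atom).

Definition litset := lit -> Prop.

Definition consistent (Z : litset) : Prop :=
  forall a, ~ (Z (LPos a) /\ Z (LNeg a)).

Inductive formula : Type :=
| FLit (l : lit)
| FBot
| FTop
| FNot (F : formula)
| FAnd (F G : formula)
| FOr  (F G : formula).

Fixpoint sat (Z : litset) (F : formula) : Prop :=
  match F with
  | FLit l => Z l
  | FBot => False
  | FTop => True
  | FNot G => ~ sat Z G
  | FAnd G H => sat Z G /\ sat Z H
  | FOr G H => sat Z G \/ sat Z H
  end.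

Record rule : Type := mkRule { head : formula; body : formula }.

Definition program := rule -> Prop.

Definition union (P Q : program) : program := fun r => P r \/ Q r.

Definition satisfies (Z : litset) (P : program) : Prop :=
  forall r, P r -> sat Z (body r) -> sat Z (head r).

Fixpoint reduct (Z : litset) (F : formula) : formula :=
  match F with
  | FLit l => FLit l
  | FBot => FBot
  | FTop => FTop
  | FNot G => if excluded_middle_informative (sat Z G) then FBot else FTop
  | FAnd G H => FAnd (reduct Z G) (reduct Z H)
  | FOr G H => FOr (reduct Z G) (reduct Z H)
  end.

Definition reduct_rule (Z : litset) (r : rule) : rule :=
  mkRule (reduct Z (head r)) (reduct Z (body r)).

Definition reduct_prog (Z : litset) (P : program) : program :=
  fun r' => exists r, P r /\ r' = reduct_rule Z r.

Definition subset (Z1 Z2 : litset) : Prop := forall l, Z1 l -> Z2 l.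

Definition minimal_model (P : program) (Z : litset) : Prop :=
  consistent Z /\ satisfies Z P /\
  forall Z', consistent Z' -> satisfies Z' P -> subset Z' Z -> subset Z Z'.

Definition answer_set (P : program) (Z : litset) : Prop :=
  minimal_model (reduct_prog Z P) Z.

Definition strongly_equivalent (P1 P2 : program) : Prop :=
  forall P : program, forall Z : litset,
    answer_set (union P1 P) Z <-> answer_set (union P2 P) Z.

Fixpoint big_and (l : list formula) : formula :=
  match l with
  | [] => FTop
  | [F] => F
  | F :: rest => FAnd F (big_and rest)
  end.

Fixpoint big_or (l : list formula) : formula :=
  match l with
  | [] => FBot
  | [F] => F
  | F :: rest => FOr F (big_or rest)
  end.

Inductive elem : Type := EPos (l : lit) | ENot (l : lit).

Definition elem_formula (c : elem) : formula :=
  match c with EPos l => FLit l | ENot l => FNot (FLit l) end.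

Inductive xbound : Type := XFin (r : R) | XPInf | XMInf.

Definition xle_b (w : xbound) (s : R) : bool :=
  match w with
  | XFin r => if Rle_dec r s then true else false
  | XPInf => false
  | XMInf => true
  end.

Definition xlt_b (w : xbound) (s : R) : bool :=
  match w with
  | XFin r => if Rlt_dec r s then true else false
  | XPInf => false
  | XMInf => true
  end.

Record wconstr : Type := mkW {
  lower : xbound;
  elems : list (elem * R);
  upper : xbound }.

Record wrule : Type := mkWRule { whead : wconstr; wbody : list wconstr }.

Definition wprogram := wrule -> Prop.

Definition weights_nonneg (C : wconstr) : Prop :=
  forall p, In p (elems C) -> 0 <= snd p.

(** All subsets I of {1..m}, each as (list of F_i for i in I, sum of w_i). *)
Fixpoint subsets (S : list (elem * R)) : list (list formula * R) :=
  match S with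
  | [] => [([], 0)]
  | (c, w) :: rest =>
      map (fun p => (elem_formula c :: fst p, w + snd p)) (subsets rest)
      ++ subsets rest
  end.

(** <F_1,...,F_m>:X with X given by a boolean test on the weight sum. *)
Definition sel (S : list (elem * R)) (test : R -> bool) : formula :=
  big_or (map (fun p => big_and (fst p))
              (filter (fun p => test (snd p)) (subsets S))).

Definition tr_le (w : xbound) (S : list (elem * R)) : formula := sel S (xle_b w).
Definition tr_lt (w : xbound) (S : list (elem * R)) : formula := sel S (xlt_b w).

Definition tr_constr (C : wconstr) : formula :=
  FAnd (tr_le (lower C) (elems C)) (FNot (tr_lt (upper C) (elems C))).

Definition pos_heads (r : wrule) : list lit :=
  flat_map (fun p => match fst p with EPos l => [l] | ENot _ => [] end)
           (elems (whead r)).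

Definition tr_body (r : wrule) : list formula := map tr_constr (wbody r).

Definition tr_rule (r : wrule) : rule :=
  mkRule (big_and (map (fun l => FOr (FLit l) (FNot (FLit l))) (pos_heads r)
                   ++ [tr_constr (whead r)]))
         (big_and (tr_body r)).

Definition tr_prog (O : wprogram) : program :=
  fun r' => exists r, O r /\ r' = tr_rule r.

Definition tr_rule_nd (r : wrule) : list rule :=
  map (fun l => mkRule (FLit l) (big_and (FNot (FNot (FLit l)) :: tr_body r)))
      (pos_heads r)
  ++ [mkRule FBot (big_and (FNot (tr_constr (whead r)) :: tr_body r))].

Definition tr_prog_nd (O : wprogram) : program :=
  fun r' => exists r, O r /\ In r' (tr_rule_nd r).

End Nested.

(* Main.v *)
Require Import Defs.
From Stdlib Require Import Reals List Classical ClassicalDescription.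
Import ListNotations.

Section Proof.
Variable atom : Type.
Implicit Types X Y : litset atom.

Lemma sat_big_and X (l : list (formula atom)) :
  sat X (big_and l) <-> (forall F, In F l -> sat X F).
Proof.
  induction l as [|F l IH]; simpl.
  - split; [tauto| auto].
  - destruct l as [|G l'].
    + simpl. split; [intros H F' [<-|[]]; auto | intros H; apply H; auto].
    + change (sat X F /\ sat X (big_and (G :: l')) <->
              (forall F0, F = F0 \/ In F0 (G :: l') -> sat X F0)).
      rewrite IH. split.
      * intros [H1 H2] F0 [<-|H]; auto.
      * intros H; split; auto.
Qed.

Lemma red_big_and X Y (l : list (formula atom)) :
  sat X (reduct Y (big_and l)) <-> (forall F, In F l -> sat X (reduct Y F)).
Proof.
  induction l as [|F l IH]; simpl.
  - split; [tauto| auto].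
  - destruct l as [|G l'].
    + simpl. split; [intros H F' [<-|[]]; auto | intros H; apply H; auto].
    + change (sat X (reduct Y F) /\ sat X (reduct Y (big_and (G :: l'))) <->
              (forall F0, F = F0 \/ In F0 (G :: l') -> sat X (reduct Y F0))).
      rewrite IH. split.
      * intros [H1 H2] F0 [<-|H]; auto.
      * intros H; split; auto.
Qed.

Lemma red_big_or X Y (l : list (formula atom)) :
  sat X (reduct Y (big_or l)) <-> (exists F, In F l /\ sat X (reduct Y F)).
Proof.
  induction l as [|F l IH]; simpl.
  - split; [tauto| intros [? [[] _]]].
  - destruct l as [|G l'].
    + simpl. split; [intros H; exists F; auto | intros [F' [[<-|[]] H]]; auto].
    + change (sat X (reduct Y F) \/ sat X (reduct Y (big_or (G :: l'))) <->
              (exists F0, (F = F0 \/ In F0 (G :: l')) /\ sat X (reduct Y F0))).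
      rewrite IH. split.
      * intros [H|[F0 [H1 H2]]]; eauto.
      * intros [F0 [[<-|H1] H2]]; eauto.
Qed.

Lemma sat_big_or X (l : list (formula atom)) :
  sat X (big_or l) <-> (exists F, In F l /\ sat X F).
Proof.
  induction l as [|F l IH]; simpl.
  - split; [tauto| intros [? [[] _]]].
  - destruct l as [|G l'].
    + simpl. split; [intros H; exists F; auto | intros [F' [[<-|[]] H]]; auto].
    + change (sat X F \/ sat X (big_or (G :: l')) <->
              (exists F0, (F = F0 \/ In F0 (G :: l')) /\ sat X F0)).
      rewrite IH. split.
      * intros [H|[F0 [H1 H2]]]; eauto.
      * intros [F0 [[<-|H1] H2]]; eauto.
Qed.

Lemma red_not X Y (G : formula atom) :
  sat X (reduct Y (FNot G)) <-> ~ sat Y G.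
Proof.
  simpl. destruct (excluded_middle_informative (sat Y G)); simpl; tauto.
Qed.

Lemma mono X Y (F : formula atom) :
  subset X Y -> sat X (reduct Y F) -> sat Y (reduct Y F).
Proof.
  intros HXY. induction F; simpl; auto; try tauto.
  destruct (excluded_middle_informative (sat Y F)); simpl; tauto.
Qed.

Lemma red_self Y (F : formula atom) : sat Y (reduct Y F) <-> sat Y F.
Proof.
  induction F; simpl; try tauto.
  destruct (excluded_middle_informative (sat Y F)); simpl; tauto.
Qed.

Lemma subsets_elems (S : list (elem atom * R)) p F :
  In p (subsets S) -> In F (fst p) -> exists c, In c (map fst S) /\ F = elem_formula c.
Proof.
  revert p; induction S as [|[c w] S IH]; intros p; simpl.
  - intros [<-|[]] [].
  - intros Hp HF. apply in_app_or in Hp as [Hp|Hp].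
    + apply in_map_iff in Hp as [q [<- Hq]]. simpl in HF.
      destruct HF as [<-|HF]; [exists c; auto|].
      destruct (IH q Hq HF) as [c' [H1 H2]]; eauto.
    + destruct (IH p Hp HF) as [c' [H1 H2]]; eauto.
Qed.

Lemma key_sel X Y (S : list (elem atom * R)) test :
  (forall l, In (EPos l) (map fst S) -> Y l -> X l) ->
  sat Y (sel S test) -> sat X (reduct Y (sel S test)).
Proof.
  intros Hl H. unfold sel in *. apply sat_big_or in H as [F [HF HY]].
  apply red_big_or. exists F; split; auto.
  apply in_map_iff in HF as [p [<- Hp]]. apply filter_In in Hp as [Hp _].
  rewrite sat_big_and in HY. apply red_big_and. intros G HG.
  destruct (subsets_elems S p G Hp HG) as [c [Hc ->]].
  specialize (HY _ HG). destruct c as [l|l]; simpl in *.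
  - apply Hl; auto.
  - destruct (excluded_middle_informative (Y l)); simpl; tauto.
Qed.

Definition rsat X Y (r : rule atom) :=
  sat X (reduct Y (Defs.body r)) -> sat X (reduct Y (Defs.head r)).

Lemma pos_heads_in (r : wrule atom) l :
  In (EPos l) (map fst (elems (whead r))) -> In l (pos_heads r).
Proof.
  intros H. unfold pos_heads. apply in_flat_map.
  apply in_map_iff in H as [p [Hp Hin]]. exists p. split; auto. rewrite Hp. simpl; auto.
Qed.

Lemma rule_equiv X Y (r : wrule atom) : subset X Y ->
  (rsat X Y (tr_rule r) <-> forall r', In r' (tr_rule_nd r) -> rsat X Y r').
Proof.
  intros HXY. unfold rsat, tr_rule, tr_rule_nd. cbn [Defs.body Defs.head].
  set (C := tr_constr (whead r)).
  rewrite red_big_and, red_big_and.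
  split.
  - intros H r' Hr'. apply in_app_or in Hr' as [Hr'|[<-|[]]].
    + apply in_map_iff in Hr' as [l [<- Hl]]. cbn [Defs.body Defs.head].
      rewrite red_big_and. intros Hb.
      assert (Hnn := Hb _ (or_introl eq_refl)). rewrite red_not in Hnn.
      assert (Hb' : forall F, In F (tr_body r) -> sat X (reduct Y F)) by (intros; apply Hb; simpl; auto).
      specialize (H Hb' (FOr (FLit l) (FNot (FLit l)))).
      simpl in H. destruct (excluded_middle_informative (Y l)); simpl in H.
      * destruct H; [apply in_or_app; left; apply in_map_iff; eauto | auto | tauto].
      * tauto.
    + cbn [Defs.body Defs.head]. rewrite red_big_and. intros Hb.
      assert (Hn := Hb _ (or_introl eq_refl)). rewrite red_not in Hn.
      assert (Hb' : forall F, In F (tr_body r) -> sat X (reduct Y F)) by (intros; apply Hb; simpl; auto).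
      specialize (H Hb' C). apply Hn. apply red_self. apply (mono _ _ _ HXY).
      apply H. apply in_or_app; right; simpl; auto.
  - intros H Hb F HF. apply in_app_or in HF as [HF|[<-|[]]].
    + apply in_map_iff in HF as [l [<- Hl]]. simpl.
      destruct (excluded_middle_informative (Y l)) as [Yl|nYl]; simpl; [left|right; auto].
      specialize (H (mkRule (FLit l) (big_and (FNot (FNot (FLit l)) :: tr_body r)))).
      cbn [Defs.body Defs.head] in H. apply H.
      * apply in_or_app; left; apply in_map_iff; eauto.
      * apply red_big_and. intros G [<-|HG]; [apply red_not; simpl; tauto| auto].
    + destruct (classic (sat Y C)) as [HC|HC].
      * unfold C, tr_constr in *. simpl in HC |- *. destruct HC as [H1 H2]. split.
        -- apply key_sel; auto. intros l Hl Yl.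
           specialize (H (mkRule (FLit l) (big_and (FNot (FNot (FLit l)) :: tr_body r)))).
           cbn [Defs.body Defs.head] in H. apply H.
           ++ apply in_or_app; left; apply in_map_iff. exists l; split; auto.
              apply pos_heads_in; auto.
           ++ apply red_big_and. intros G [<-|HG]; [apply red_not; simpl; tauto| auto].
        -- destruct (excluded_middle_informative (sat Y (tr_lt (upper (whead r)) (elems (whead r))))); simpl; tauto.
      * exfalso.
        specialize (H (mkRule (FBot atom) (big_and (FNot C :: tr_body r)))).
        cbn [Defs.body Defs.head] in H. apply H.
        -- apply in_or_app; right; simpl; auto.
        -- apply red_big_and. intros G [<-|HG]; [apply red_not; auto| auto].
Qed.

Lemma satisfies_red X Y (P : program atom) :
  satisfies X (reduct_prog Y P) <-> forall r, P r -> rsat X Y r.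
Proof.
  unfold satisfies, reduct_prog, rsat. split.
  - intros H r Pr. apply (H (reduct_rule Y r)). eauto.
  - intros H r' [r [Pr ->]]. apply H; auto.
Qed.

Lemma prog_equiv X Y (O : wprogram atom) : subset X Y ->
  (satisfies X (reduct_prog Y (tr_prog_nd O)) <-> satisfies X (reduct_prog Y (tr_prog O))).
Proof.
  intros HXY. rewrite !satisfies_red. split.
  - intros H r' [r [Or ->]]. apply rule_equiv; auto.
    intros r'' Hr''. apply H. exists r; auto.
  - intros H r' [r [Or Hin]]. revert r' Hin. apply rule_equiv; auto.
    apply H. exists r; auto.
Qed.

Lemma satisfies_union X Y (A B : program atom) :
  satisfies X (reduct_prog Y (union A B)) <->
  satisfies X (reduct_prog Y A) /\ satisfies X (reduct_prog Y B).
Proof.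
  rewrite !satisfies_red. unfold union. split.
  - intros H; split; intros r Hr; apply H; auto.
  - intros [H1 H2] r [Hr|Hr]; auto.
Qed.

Lemma se_of (A B : program atom) :
  (forall X Y, subset X Y ->
     (satisfies X (reduct_prog Y A) <-> satisfies X (reduct_prog Y B))) ->
  strongly_equivalent A B.
Proof.
  intros E P Z. unfold answer_set, minimal_model.
  assert (HZ : subset Z Z) by (intros l; auto).
  rewrite !satisfies_union, (E Z Z HZ).
  split; intros [Hc [Hs Hm]]; split; auto; split; auto;
    intros Z' Hc' Hs' Hsub; apply Hm; auto; rewrite satisfies_union in *;
    [rewrite E | rewrite <- E]; tauto.
Qed.

End Proof.

Theorem proposition2 (atom : Type) (O : wprogram atom) :
  (forall r, O r -> weights_nonneg (whead r) /\
                    forall C, In C (wbody r) -> weights_nonneg C) ->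
  strongly_equivalent (tr_prog_nd O) (tr_prog O).
Proof.
  intros _. apply se_of. intros X Y H. apply prog_equiv; auto.
Qed.
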